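(* Let $A\in\mathbb{R}^{n\times n}$ and $B\in\mathbb{R}^{n\times m}$ define the discrete-time system $x^+=Ax+Bu$. Let $\mathrm{S}\in\mathbb{R}^{n_s\times n}$ be such that $\mathcal{S}:=\{x\in\mathbb{R}^n:\mathrm{S}x\le \mathbf{1}\}$ is a C-set, and let $\mathrm{U}\in\mathbb{R}^{n_u\times m}$ be such that $\mathcal{U}:=\{u\in\mathbb{R}^m:\mathrm{U}u\le\mathbf{1}\}$ (a polyhedral convex set containing the origin in its interior). Let $u_d(0),\dots,u_d(T-1)$ be an input sequence and $x_d(0),\dots,x_d(T)$ the corresponding states with $x_d(k+1)=Ax_d(k)+Bu_d(k)$, and set $U_{0,T}:=[u_d(0)\ \cdots\ u_d(T-1)]$, $X_{0,T}:=[x_d(0)\ \cdots\ x_d(T-1)]$, $X_{1,T}:=[x_d(1)\ \cdots\ x_d(T)]$. If there exist $\lambda\in\mathbb{R}$, $G_K\in\mathbb{R}^{T\times n}$ and $P\in\mathbb{R}^{n_s\times n_s}$ with $P\ge0$ solving the problem of minimizing $\lambda$ subject to $0\le\lambda<1$, $P\mathbf{1}\le\lambda\mathbf{1}$, $P\mathrm{S}=\mathrm{S}X_{1,T}G_K$, $\mathrm{U}U_{0,T}G_Ks\le\mathbf{1}$ for all vertices $s$ of $\mathcal{S}$, and $I_n=X_{0,T}G_K$, then the controller $K=U_{0,T}G_K$ ensures that $\mathcal{S}$ is $\lambda$-contractive for $x^+=(A+BK)x$ and admissible for $\mathcal{U}$.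
   Context: $\mathbf{1}$ denotes the vector of all ones of appropriate dimension; inequalities between vectors/matrices are entrywise. A C-set is a convex compact subset of $\mathbb{R}^n$ containing the origin as an interior point. For $\mu\ge0$, $\mu\mathcal{S}:=\{\mu x:x\in\mathcal{S}\}$. A C-set $\mathcal{S}$ is $\lambda$-contractive for $x^+=Fx$ (with $\lambda\in[0,1)$) if for each $x\in\mathcal{S}$, $\inf\{\lambda'\ge0: Fx\in\lambda'\mathcal{S}\}\le\lambda$. $\mathcal{S}$ is admissible for $\mathcal{U}$ (with gain $K$) if $Kx\in\mathcal{U}$ for every $x\in\mathcal{S}$. *)

(* Defs.v *)
From HB Require Import structures.
From mathcomp Require Import all_boot all_order all_algebra.
From mathcomp Require Import all_classical all_reals.
From mathcomp Require Import topology normedtype matrix_topology matrix_normedtype.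
Import numFieldNormedType.Exports.
Set Implicit Arguments. Unset Strict Implicit. Unset Printing Implicit Defensive.
Import Order.TTheory GRing.Theory Num.Theory.
Local Open Scope classical_set_scope.
Local Open Scope ring_scope.

Definition mxle (R : realType) (p q : nat) (M N : 'M[R]_(p, q)) : Prop :=
  forall i j, M i j <= N i j.

Definition ones (R : realType) (p : nat) : 'cV[R]_p := const_mx 1.

Definition polyset (R : realType) (p q : nat) (M : 'M[R]_(p, q)) : set 'cV[R]_q :=
  [set x | mxle (M *m x) (ones R p)].

Definition convexS (R : realType) (n : nat) (S : set 'cV[R]_n) : Prop :=
  forall x y t, S x -> S y -> 0 <= t <= 1 -> S (t *: x + (1 - t) *: y).

Definition Cset (R : realType) (n : nat) (S : set 'cV[R]_n) : Prop :=
  convexS S /\ compact S /\ interior S 0.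

Definition scale_set (R : realType) (n : nat) (mu : R) (S : set 'cV[R]_n)
  : set 'cV[R]_n := [set mu *: y | y in S].

Definition contractive (R : realType) (n : nat) (S : set 'cV[R]_n)
    (F : 'M[R]_n) (lam : R) : Prop :=
  0 <= lam < 1 /\
  forall x, S x -> inf [set l : R | 0 <= l /\ scale_set l S (F *m x)] <= lam.

Definition admissible (R : realType) (n m : nat) (S : set 'cV[R]_n)
    (U : set 'cV[R]_m) (K : 'M[R]_(m, n)) : Prop :=
  forall x, S x -> U (K *m x).

Definition is_vertex (R : realType) (n : nat) (S : set 'cV[R]_n) (x : 'cV[R]_n)
  : Prop :=
  S x /\ forall y z t, S y -> S z -> 0 < t < 1 ->
    x = t *: y + (1 - t) *: z -> y = z.

Definition data_mx (R : realType) (p T : nat) (v : nat -> 'cV[R]_p) (off : nat)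
  : 'M[R]_(p, T) := \matrix_(i < p, j < T) v (j + off)%N i ord0.

Definition lp_feasible (R : realType) (n m ns nu T : nat)
    (Sm : 'M[R]_(ns, n)) (Um : 'M[R]_(nu, m))
    (U0 : 'M[R]_(m, T)) (X0 X1 : 'M[R]_(n, T))
    (lam : R) (GK : 'M[R]_(T, n)) (P : 'M[R]_ns) : Prop :=
  0 <= lam < 1 /\
  mxle (0 : 'M[R]_ns) P /\
  mxle (P *m ones R ns) (lam *: ones R ns) /\
  P *m Sm = Sm *m X1 *m GK /\
  (forall s, is_vertex (polyset Sm) s -> mxle (Um *m U0 *m GK *m s) (ones R nu)) /\
  (1%:M : 'M[R]_n) = X0 *m GK.

Definition lp_optimal (R : realType) (n m ns nu T : nat)
    (Sm : 'M[R]_(ns, n)) (Um : 'M[R]_(nu, m))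
    (U0 : 'M[R]_(m, T)) (X0 X1 : 'M[R]_(n, T))
    (lam : R) (GK : 'M[R]_(T, n)) (P : 'M[R]_ns) : Prop :=
  lp_feasible Sm Um U0 X0 X1 lam GK P /\
  forall lam' GK' P', lp_feasible Sm Um U0 X0 X1 lam' GK' P' -> lam <= lam'.

(* Main.v *)
Require Import Defs.
From HB Require Import structures.
From mathcomp Require Import all_boot all_order all_algebra.
From mathcomp Require Import all_classical all_reals.
From mathcomp Require Import topology normedtype matrix_topology matrix_normedtype.
From mathcomp Require Import derive.
From mathcomp Require Import ring lra.
Import numFieldNormedType.Exports.
Import Order.TTheory GRing.Theory Num.Theory.
Local Open Scope classical_set_scope.
Local Open Scope ring_scope.

Section Aux.
Variable R : realType.

Lemma cont_sum (n k : nat) (F : 'I_k -> 'cV[R]_n -> R) :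
  (forall j, continuous (F j)) -> continuous (fun x => \sum_j F j x).
Proof.
move=> cF.
suff H : forall s : seq 'I_k, continuous (fun x => \sum_(j <- s) F j x).
  exact: H.
elim=> [|a s IH].
  have -> : (fun x : 'cV[R]_n => \sum_(j <- [::]) F j x) = fun _ => 0.
    by apply: funext => x; rewrite big_nil.
  exact: cst_continuous.
have -> : (fun x : 'cV[R]_n => \sum_(j <- a :: s) F j x) =
   (F a + (fun x => \sum_(j <- s) F j x))%R.
  by apply: funext => x; rewrite big_cons.
by move=> x; apply: continuousD; [exact: cF|exact: IH].
Qed.

Lemma cont_lin (p n : nat) (M : 'M[R]_(p, n)) i :
  continuous (fun x : 'cV[R]_n => (M *m x) i ord0).
Proof.
have -> : (fun x : 'cV[R]_n => (M *m x) i ord0) =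
   (fun x => \sum_j (fun j (x : 'cV[R]_n) => M i j * x j ord0) j x).
  by apply: funext => x; rewrite mxE.
apply: cont_sum => j x.
apply: (@continuousM _ _ (fun _ => M i j) (fun x : 'cV[R]_n => x j ord0)).
  exact: cst_continuous.
exact: coord_continuous.
Qed.

Lemma cont_sq (n : nat) :
  continuous (fun x : 'cV[R]_n => \sum_i (x i ord0) ^+ 2).
Proof.
apply: (@cont_sum n n (fun i (x : 'cV[R]_n) => x i ord0 ^+ 2)) => j x.
apply: (@continuousM _ _ (fun x : 'cV[R]_n => x j ord0)
   (fun x : 'cV[R]_n => x j ord0)); exact: coord_continuous.
Qed.

Lemma vertex_bound (n p : nat) (Sm : 'M[R]_(p, n)) (h : 'cV[R]_n -> R) :
  compact (polyset Sm) -> convexS (polyset Sm) -> continuous h ->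
  (forall y z t, h (t *: y + (1 - t) *: z) = t * h y + (1 - t) * h z) ->
  (forall s, is_vertex (polyset Sm) s -> h s <= 1) ->
  forall x, polyset Sm x -> h x <= 1.
Proof.
move=> cS convS ch hlin hv x Sx.
have S0 : polyset Sm !=set0 by exists x.
have hc : {within polyset Sm, continuous h} by apply: continuous_subspaceT.
have [c1 c1S c1max] := compact_EVT_max S0 cS hc.
rewrite inE in c1S.
pose F := polyset Sm `&` (h @^-1` [set y | y = h c1]).
have cF : compact F.
  apply: compact_closedI => //.
  by move/continuous_closedP: ch; apply; apply: closed_eq.
have F0 : F !=set0 by exists c1.
pose g := fun x : 'cV[R]_n => \sum_i (x i ord0) ^+ 2.
have gc : {within F, continuous g} by apply: continuous_subspaceT; exact: cont_sq.
have [c2 c2F c2max] := compact_EVT_max F0 cF gc.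
rewrite inE in c2F; case: c2F => c2S /= hc2.
have hx : h x <= h c1 by apply: c1max; rewrite inE.
suff : h c2 <= 1 by rewrite hc2; apply: le_trans.
apply: hv; split => // y z t Sy Sz /andP [t0 t1] c2E.
have hy : h y <= h c1 by apply: c1max; rewrite inE.
have hz : h z <= h c1 by apply: c1max; rewrite inE.
have hcc : h c2 = t * h y + (1 - t) * h z by rewrite c2E hlin.
have hyE : h y = h c1 by nra.
have hzE : h z = h c1 by nra.
have gy : g y <= g c2 by apply: c2max; rewrite inE.
have gz : g z <= g c2 by apply: c2max; rewrite inE.
have key : \sum_i (t * (1 - t) * (y i ord0 - z i ord0) ^+ 2) =
    t * g y + (1 - t) * g z - g c2.
  rewrite /g !mulr_sumr -big_split -sumrB; apply: eq_bigr => i _.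
  rewrite c2E !mxE /=. ring.
have tt : 0 < t * (1 - t) by apply: mulr_gt0; lra.
have sum0 : \sum_i (t * (1 - t) * (y i ord0 - z i ord0) ^+ 2) = 0.
  apply/eqP; rewrite eq_le; apply/andP; split; first by rewrite key; nra.
  by apply: sumr_ge0 => i _; apply: mulr_ge0; [lra| exact: sqr_ge0].
have H := psumr_eq0P (fun i _ => mulr_ge0 (ltW tt) (sqr_ge0 (y i ord0 - z i ord0))) sum0.
apply/matrixP => i j; rewrite (ord1 j).
have := H i isT; move/eqP; rewrite mulf_eq0 (gt_eqF tt) /= sqrf_eq0 subr_eq0.
by move/eqP.
Qed.

End Aux.

Theorem corollary1 (R : realType) (n m ns nu T : nat)
    (A : 'M[R]_n) (B : 'M[R]_(n, m))
    (Sm : 'M[R]_(ns, n)) (Um : 'M[R]_(nu, m))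
    (ud : nat -> 'cV[R]_m) (xd : nat -> 'cV[R]_n)
    (lam : R) (GK : 'M[R]_(T, n)) (P : 'M[R]_ns) :
  Cset (polyset Sm) ->
  (forall k, (k < T)%N -> xd k.+1 = A *m xd k + B *m ud k) ->
  lp_optimal Sm Um (data_mx T ud 0) (data_mx T xd 0) (data_mx T xd 1)
    lam GK P ->
  contractive (polyset Sm) (A + B *m (data_mx T ud 0 *m GK)) lam /\
  admissible (polyset Sm) (polyset Um) (data_mx T ud 0 *m GK).
Proof.
move=> [convS [cS _]] hdyn [[/andP [l0 l1] [P0 [P1 [PS [Pv X0G]]]]] _].
set U0 := data_mx T ud 0 in Pv *; set X0 := data_mx T xd 0 in X0G *; set X1 := data_mx T xd 1 in PS *.
set K := U0 *m GK.
have X1E : X1 = A *m X0 + B *m U0.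
  apply/matrixP => i j; rewrite !mxE addn1 (hdyn _ (ltn_ord j)) !mxE.
  by congr (_ + _); apply: eq_bigr => k _; rewrite /X0 /U0 !mxE addn0.
have SF : P *m Sm = Sm *m (A + B *m K).
  by rewrite PS X1E -mulmxA mulmxDl -!mulmxA -X0G mulmx1.
split.
  split; first by rewrite l0 l1.
  move=> x Sx.
  set F := A + B *m K.
  have bnd : forall i, (Sm *m (F *m x)) i ord0 <= lam.
    move=> i; rewrite mulmxA -SF -mulmxA.
    apply: (le_trans _ (_ : (P *m ones R ns) i ord0 <= lam)).
      rewrite !mxE; apply: ler_sum => k _; rewrite !mxE.
      by apply: ler_wpM2l; [move: (P0 i k); rewrite mxE|move: (Sx k ord0); rewrite !mxE].
    by move: (P1 i ord0); rewrite !mxE mulr1.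
  apply/ler_addgt0Pr => e e0.
  set E := [set l : R | 0 <= l /\ scale_set l (polyset Sm) (F *m x)].
  have hl : has_lbound E by exists 0 => l [].
  apply: (ge_inf hl); split; first by lra.
  have lp : 0 < lam + e by lra.
  exists ((lam + e)^-1 *: (F *m x)); last first.
    by rewrite scalerA mulfV ?scale1r // gt_eqF.
  move=> i j; rewrite (ord1 j) -scalemxAr !mxE.
  apply: (le_trans (_ : _ <= (lam + e)^-1 * (lam + e))); last first.
    by rewrite mulVf ?gt_eqF.
  apply: ler_wpM2l; first by rewrite invr_ge0 ltW.
  move: (bnd i); rewrite mxE; lra.
move=> x Sx i j; rewrite (ord1 j).
have := @vertex_bound R n ns Sm (fun x => ((Um *m U0 *m GK) *m x) i ord0) cS convS
  (@cont_lin R _ _ _ i).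
rewrite !mulmxA.
rewrite [ones _ _ _ _]mxE => H; apply: H.
- by move=> y z t; rewrite mulmxDr -!scalemxAr !mxE.
- by move=> s /Pv /(_ i ord0); rewrite !mxE.
- exact: Sx.
Qed.
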